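(* Let $(\Omega, \Sigma, \mu)$ be a nonatomic measure space with $0 < \mu(\Omega) < \infty$, let $1 \le p < \infty$, $X = L^p(\mu)$, let $Y$ be a Banach space, let $g \in L^\infty(\mu)$, and let $T \in \mathcal{B}(X, Y)$ be a narrow operator. Then the operator $T g I \in \mathcal{B}(X, Y)$, $f \mapsto T(gf)$, is also narrow.
   Context: $\mathcal{B}(X,Y)$ denotes the bounded linear operators from $X$ to $Y$. A $\Sigma$-measurable function $h$ is a sign on $A \in \Sigma$ if $h$ takes values in $\{-1,0,1\}$ and $h^2 = \mathbb{I}_A$ (indicator of $A$); it is of mean zero if $\int_\Omega h\,d\mu = 0$. An operator $S \in \mathcal{B}(L^p(\mu), Y)$ is narrow if for every $A \in \Sigma$ with $\mu(A) > 0$ and every $\varepsilon > 0$ there exists a mean zero sign $h$ on $A$ with $\|Sh\| < \varepsilon$. *)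

(* Defs.v *)
From HB Require Import structures.
From mathcomp Require Import all_boot all_order all_algebra.
From mathcomp Require Import all_classical all_reals all_analysis.
Set Implicit Arguments. Unset Strict Implicit. Unset Printing Implicit Defensive.
Import Order.TTheory GRing.Theory Num.Theory.
Import numFieldNormedType.Exports.
Local Open Scope classical_set_scope.
Local Open Scope ring_scope.

Definition nonatomic d (T : measurableType d) (R : realType)
    (mu : {measure set T -> \bar R}) : Prop :=
  forall A : set T, measurable A -> (0 < mu A)%E ->
    exists B : set T, [/\ measurable B, B `<=` A, (0 < mu B)%E & (mu B < mu A)%E].

(* Bounded linear operators L^p(mu) -> Y, represented as maps on
   functions that are linear and bounded on the p-integrable (measurable,
   finite L^p-norm) functions.  Boundedness forces S f = S f' whenever
   f = f' a.e., so this is exactly B(L^p(mu), Y). *)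
Definition bounded_op d (T : measurableType d) (R : realType)
    (mu : {measure set T -> \bar R}) (p : R) (Y : normedModType R)
    (S : (T -> R) -> Y) : Prop :=
  [/\ (forall f g, f \in Lfun mu p%:E -> g \in Lfun mu p%:E ->
          S (f \+ g) = S f + S g),
      (forall (a : R) f, f \in Lfun mu p%:E -> S (fun x => a * f x) = a *: S f)
    & exists C : R, forall f, f \in Lfun mu p%:E ->
          `|S f| <= C * fine (Lnorm mu p%:E (EFin \o f))].

Definition is_sign d (T : measurableType d) (R : realType)
    (A : set T) (h : T -> R) : Prop :=
  measurable_fun setT h /\
  forall x, (h x = -1 \/ h x = 0 \/ h x = 1) /\ h x ^+ 2 = \1_A x.

Definition mean_zero d (T : measurableType d) (R : realType)
    (mu : {measure set T -> \bar R}) (h : T -> R) : Prop :=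
  (\int[mu]_x (h x)%:E = 0)%E.

(* Narrow operator (the operator being in B(L^p, Y) is stated separately). *)
Definition narrow d (T : measurableType d) (R : realType)
    (mu : {measure set T -> \bar R}) (Y : normedModType R)
    (S : (T -> R) -> Y) : Prop :=
  forall A : set T, measurable A -> (0 < mu A)%E ->
  forall eps : R, 0 < eps ->
    exists h : T -> R, [/\ is_sign A h, mean_zero mu h & `|S h| < eps].

(* Main.v *)
Require Import Defs.
From HB Require Import structures.
From mathcomp Require Import all_boot all_order all_algebra.
From mathcomp Require Import all_classical all_reals all_analysis.
From mathcomp Require Import measurable_realfun ess_sup_inf.
From mathcomp Require Import ring lra.
Set Implicit Arguments. Unset Strict Implicit. Unset Printing Implicit Defensive.
Import Order.TTheory GRing.Theory Num.Theory.
Import numFieldNormedType.Exports.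
Local Open Scope classical_set_scope.
Local Open Scope ring_scope.

Section helpers.
Context d (T : measurableType d) (R : realType) (mu : {measure set T -> \bar R}).
Variable (p : R) (p0 : 0 < p).
Hypothesis Hfin : (mu setT < +oo)%E.

Lemma Lnorm_le (u v : T -> R) : measurable_fun setT u -> measurable_fun setT v ->
  (forall x, `|u x| <= `|v x|) ->
  (Lnorm mu p%:E (EFin \o u) <= Lnorm mu p%:E (EFin \o v))%E.
Proof.
move=> mu_ mv uv; rewrite unlock /=.
apply: gt0_ler_poweR; first by rewrite invr_ge0 ltW.
- by rewrite in_itv /= leey andbT; apply: integral_ge0 => x _; rewrite lee_fin powR_ge0.
- by rewrite in_itv /= leey andbT; apply: integral_ge0 => x _; rewrite lee_fin powR_ge0.
apply: ge0_le_integral.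
all: try exact: measurableT.
- by move=> x _; rewrite lee_fin powR_ge0.
- apply/measurable_EFinP; apply: (measurableT_comp (@measurable_powR R p)).
  exact: measurableT_comp.
- apply/measurable_EFinP; apply: (measurableT_comp (@measurable_powR R p)).
  exact: measurableT_comp.
- by move=> x _; rewrite lee_fin ge0_ler_powR // ?ltW.
Qed.

Lemma LnormZr (c : R) (f : T -> R) : measurable_fun setT f ->
  Lnorm mu p%:E (EFin \o (fun x => c * f x)) = (`|c|%:E * Lnorm mu p%:E (EFin \o f))%E.
Proof.
move=> mf; rewrite unlock /=.
under eq_integral do rewrite normrM powRM // EFinM.
rewrite ge0_integralZl_EFin //; last first.
  apply/measurable_EFinP; apply: (measurableT_comp (@measurable_powR R p)).
  exact: measurableT_comp.
rewrite poweRM; last 2 first.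
- by rewrite lee_fin powR_ge0.
- by apply: integral_ge0 => x _; rewrite lee_fin powR_ge0.
by rewrite poweR_EFin -powRrM mulfV ?gt_eqF // powRr1.
Qed.

Lemma Lnorm_cst_lty (B : R) : (Lnorm mu p%:E (EFin \o (cst B : T -> R)) < +oo)%E.
Proof.
rewrite unlock /= poweR_lty // integral_cst //.
by rewrite lte_mul_pinfty // lee_fin powR_ge0.
Qed.

Lemma bdd_Lfun (f : T -> R) (B : R) : measurable_fun setT f ->
  (forall x, `|f x| <= B) -> f \in Lfun mu p%:E.
Proof.
move=> mf fB; rewrite inE; apply/andP; split; rewrite inE //=.
rewrite /finite_norm; apply: (le_lt_trans _ (Lnorm_cst_lty B)).
apply: Lnorm_le => // x; rewrite /= (le_trans (fB x)) //.
exact: ler_norm.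
Qed.

Lemma Lnorm_ae (u v : T -> R) : measurable_fun setT u -> measurable_fun setT v ->
  u = v %[ae mu] -> Lnorm mu p%:E (EFin \o u) = Lnorm mu p%:E (EFin \o v).
Proof.
move=> mu_ mv uv; rewrite unlock /=; congr (_ `^ _)%E.
apply: ae_eq_integral => //.
- apply/measurable_EFinP; apply: (measurableT_comp (@measurable_powR R p)).
  exact: measurableT_comp.
- apply/measurable_EFinP; apply: (measurableT_comp (@measurable_powR R p)).
  exact: measurableT_comp.
by apply: filterS uv => x /[apply] ->.
Qed.

Lemma integrable_bdd (f : T -> R) (B : R) : 0 <= B -> measurable_fun setT f ->
  (forall x, `|f x| <= B) -> mu.-integrable setT (EFin \o f).
Proof.
move=> B0 mf fB; apply/integrableP; split; first exact/measurable_EFinP.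
apply: (le_lt_trans (y := (\int[mu]_x (cst B%:E x))%E)).
  apply: ge0_le_integral.
  all: try exact: measurableT.
  - by move=> x _; exact: abse_ge0.
  - apply: (@measurableT_comp _ _ _ _ _ _ abse _ (EFin \o f)) => //.
    exact/measurable_EFinP.
  - exact: measurable_cst.
  - by move=> x _ /=; rewrite lee_fin.
by rewrite integral_cst // lte_mul_pinfty.
Qed.
End helpers.

Lemma Lfun_meas d (T : measurableType d) (R : realType) (mu : {measure set T -> \bar R}) q
  (f : T -> R) : f \in Lfun mu q -> measurable_fun setT f.
Proof. by move=> /sub_Lfun_mfun; rewrite inE. Qed.

Section signs.
Context d (T : measurableType d) (R : realType).
Implicit Types (A : set T) (h : T -> R).

Lemma sign_zero A h x : is_sign A h -> ~ A x -> h x = 0.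
Proof.
case=> _ /(_ x) [_ hsq] nAx; move: hsq; rewrite indicE memNset //.
by move=> /eqP; rewrite sqrf_eq0 => /eqP.
Qed.

Lemma sign_one A h x : is_sign A h -> A x -> h x ^+ 2 = 1.
Proof. by case=> _ /(_ x) [_ ->] Ax; rewrite indicE mem_set. Qed.

Lemma sign_abs A h x : is_sign A h -> `|h x| <= 1.
Proof.
by case=> _ /(_ x) [[->|[->|->]] _]; rewrite ?normrN ?normr1 ?normr0.
Qed.

Lemma sign_meas A h : is_sign A h -> measurable_fun setT h.
Proof. by case. Qed.

Lemma sign_union A1 A2 h1 h2 : is_sign A1 h1 -> is_sign A2 h2 ->
  (forall x, A1 x -> ~ A2 x) -> is_sign (A1 `|` A2) (fun x => h1 x + h2 x).
Proof.
move=> s1 s2 dis; split; first exact: measurable_funD (sign_meas s1) (sign_meas s2).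
move=> x; have [a1|na1] := pselect (A1 x).
  rewrite (sign_zero s2 (dis _ a1)) addr0; have [v _] := s1.2 x; split => //.
  by rewrite (sign_one s1 a1) indicE mem_set //; left.
rewrite (sign_zero s1 na1) add0r; have [v sq] := s2.2 x; split => //.
rewrite sq !indicE; have [a2|na2] := pselect (A2 x).
  by rewrite !mem_set //; right.
by rewrite !memNset // => -[].
Qed.

Lemma sign_eqset A B h : A = B -> is_sign A h -> is_sign B h.
Proof. by move=> ->. Qed.

End signs.

Section ops.
Context d (T : measurableType d) (R : realType) (mu : {measure set T -> \bar R}).
Variable (p : R) (p0 : 0 < p).
Hypothesis Hfin : (mu setT < +oo)%E.
Variable (Y : normedModType R) (S : (T -> R) -> Y).
Hypothesis HS : bounded_op mu p S.

Lemma S_norm : exists C, 0 <= C /\ forall f, f \in Lfun mu p%:E ->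
  `|S f| <= C * fine (Lnorm mu p%:E (EFin \o f)).
Proof.
case: HS => _ _ [C HC]; exists (Num.max C 0); split; first by rewrite le_max lexx orbT.
move=> f fL; apply: (le_trans (HC f fL)); apply: ler_wpM2r.
  by apply: fine_ge0; exact: Lnorm_ge0.
by rewrite le_max lexx.
Qed.

Lemma ae0_Lfun (w : T -> R) : measurable_fun setT w -> w = (fun _ => 0) %[ae mu] ->
  w \in Lfun mu p%:E /\ S w = 0.
Proof.
move=> mw w0.
have LN : Lnorm mu p%:E (EFin \o w) = 0%E.
  rewrite (Lnorm_ae p mw (measurable_cst _) w0).
  by rewrite (_ : EFin \o _ = cst 0%E) // Lnorm0 // gt_eqF // lte_fin.
have wL : w \in Lfun mu p%:E.
  by rewrite inE; apply/andP; split; rewrite inE //= /finite_norm LN.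
split => //; have [C [C0 HC]] := S_norm.
by apply/eqP; rewrite -normr_le0 (le_trans (HC w wL)) // LN /= mulr0.
Qed.

Lemma S_ae (u v : T -> R) : u \in Lfun mu p%:E -> v \in Lfun mu p%:E ->
  u = v %[ae mu] -> S u = S v.
Proof.
move=> uL vL uv; have mu_ := Lfun_meas uL; have mv := Lfun_meas vL.
have mw : measurable_fun setT (fun x => u x - v x) by exact: measurable_funB.
have [wL w0] := @ae0_Lfun (fun x => u x - v x) mw
  (filterS (fun x (H : setT x -> u x = v x) (t : setT x) => etrans (f_equal (fun y => y - v x) (H t)) (subrr (v x))) uv).
case: HS => Hadd _ _.
have -> : u = v \+ (fun x => u x - v x) by apply/funext => x /=; rewrite addrC subrK.
by rewrite Hadd // w0 addr0.
Qed.


Lemma mul_bnd (u v : T -> R) (U : R) x : `|u x| <= U -> `|v x| <= 1 -> `|u x * v x| <= U.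
Proof.
move=> hu hv; rewrite normrM -[U]mulr1; apply: ler_pM => //.
Qed.

Lemma grp_id (a b e r : Y) : a + (b + e) - (r + b) = (a - r) + e.
Proof. by rewrite (addrC b e) addrA (addrC r b) addrKA addrAC. Qed.

Hypothesis HSn : narrow mu S.

Lemma narrow_core (G : T -> R) (M : R) : 0 <= M -> measurable_fun setT G ->
  (forall x, `|G x| <= M) -> narrow mu (fun f => S (fun x => G x * f x)).
Proof.
move=> M0 mG GM A mA muA eps eps0.
have [C [C0 HC]] := S_norm.
have [Hadd Hsc _] := HS.
set L := fine (Lnorm mu p%:E (EFin \o (cst 1 : T -> R))).
have L0 : 0 <= L by apply: fine_ge0; exact: Lnorm_ge0.
have Lfin : Lnorm mu p%:E (EFin \o (cst 1 : T -> R)) \is a fin_num.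
  by rewrite ge0_fin_numE ?Lnorm_ge0 // Lnorm_cst_lty.
have CL0 : 0 <= C * L by rewrite mulr_ge0.
set dl := eps / (2 * (C * L + 1)).
have dl0 : 0 < dl by rewrite divr_gt0 // mulr_gt0 //; lra.
set N := Num.Def.archi_bound (2 * M / dl).
have HN : 2 * M / dl < N%:R by apply: archi_boundP; apply: divr_ge0; [by rewrite mulr_ge0 | exact: ltW].
set eta := eps / (2 * (N%:R + 1)).
have N0 : 0 <= (N%:R : R) by [].
have eta0 : 0 < eta by rewrite divr_gt0 // mulr_gt0 //; lra.
pose An (n : nat) := A `&` [set x | G x < - M + n%:R * dl].
have mAn n : measurable (An n).
  apply: measurableI => //.
  have := mG measurableT _ (measurable_itv `]-oo, (- M + n%:R * dl)[).
  by rewrite setTI preimage_itvNyo.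
have GMl x : - M <= G x by have := GM x; rewrite ler_norml => /andP[].
have GMr x : G x <= M by have := GM x; rewrite ler_norml => /andP[].
have key : forall n, exists (h r : T -> R), [/\ is_sign (An n) h, mean_zero mu h,
    measurable_fun setT r, (forall x, `|r x| <= dl * `|h x|) &
    `|S (fun x => G x * h x) - S r| <= n%:R * eta].
  elim=> [|n [h [r [sh mh mr rh Hn]]]].
    exists (fun _ => 0), (fun _ => 0); split.
    - split; first exact: measurable_cst.
      move=> x; split; first by right; left.
      rewrite indicE memNset ?expr2 ?mulr0 // => -[_ /=].
      by rewrite mulr0n mul0r addr0 ltNge GMl.
    - by rewrite /mean_zero; apply: integral0_eq.
    - exact: measurable_cst.
    - by move=> x; rewrite normr0 mulr0.
    - rewrite (_ : (fun x => G x * 0) = fun _ => 0); last by apply/funext => x; rewrite mulr0.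
      by rewrite subrr normr0 mulr0n mul0r.
  set c := - M + n%:R * dl.
  set D := An n.+1 `\` An n.
  have mD : measurable D by apply: measurableD.
  have c1 : 0 < `|c| + 1 by apply: ltr_wpDl => //.
  have ec : 0 < eta / (`|c| + 1) by rewrite divr_gt0.
  have [h' [sh' mh' Sh']] : exists h', [/\ is_sign D h', mean_zero mu h' &
      `|S h'| < eta / (`|c| + 1)].
    have [D0|Dne] := eqVneq (mu D) 0%E.
      exists (\1_D); split.
      - split; first exact: measurable_indic.
        move=> x; rewrite indicE; case: (x \in D) => /=.
          by rewrite mulr1n expr1n; split => //; right; right.
        by rewrite mulr0n expr2 mulr0; split => //; right; left.
      - by rewrite /mean_zero integral_indic // setIT D0.
      - have mI : measurable_fun setT (\1_D : T -> R) by exact: measurable_indic.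
        have ae1 : (\1_D : T -> R) = (fun _ => 0) %[ae mu].
          exists D; split => // x /= H; apply: contrapT => Dx; apply: H => _.
          by rewrite indicE memNset.
        by have [_ ->] := ae0_Lfun mI ae1; rewrite normr0.
    have Dpos : (0 < mu D)%E by rewrite lt0e Dne measure_ge0.
    have [h' [? ? ?]] := HSn mD Dpos ec.
    by exists h'; split.
  pose h2 := fun x => h x + h' x.
  pose r2 := fun x => r x + (G x - c) * h' x.
  have eqS : (n.+1)%:R * dl = n%:R * dl + dl by rewrite -natr1 mulrDl mul1r.
  have AnS : An n.+1 = An n `|` D.
    rewrite /D setDUK // => x [Ax /= Gx]; split => //=; rewrite /= eqS; lra.
  have hn x : ~ An n x -> h x = 0 := sign_zero sh.
  have h'n x : ~ D x -> h' x = 0 := sign_zero sh'.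
  have hb x : `|h x| <= 1 := sign_abs x sh.
  have h'b x : `|h' x| <= 1 := sign_abs x sh'.
  have dis : forall x, An n x -> ~ D x by move=> x ? [].
  have sh2 : is_sign (An n.+1) h2 by rewrite AnS; exact: sign_union.
  have mh_ := sign_meas sh.
  have mh'_ := sign_meas sh'.
  exists h2, r2; split => //.
  - rewrite /mean_zero /h2; under eq_integral do rewrite EFinD.
    rewrite integralD //; first by rewrite mh mh' adde0.
      exact: (integrable_bdd Hfin ler01 mh_ hb).
    exact: (integrable_bdd Hfin ler01 mh'_ h'b).
  - apply: measurable_funD => //; apply: measurable_funM => //.
    by apply: measurable_funB => //; exact: measurable_cst.
  - move=> x; rewrite /r2 /h2; have [anx|nanx] := pselect (An n x).
      by rewrite (h'n x (dis x anx)) !mulr0 !addr0; exact: rh.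
    rewrite (hn x nanx) add0r.
    have r0 : r x = 0.
      by apply/eqP; rewrite -normr_le0 (le_trans (rh x)) // hn // normr0 mulr0.
    rewrite r0 add0r normrM; have [Dx|nDx] := pselect (D x); last first.
      by rewrite h'n // normr0 !mulr0.
    apply: ler_wpM2r => //.
    case: Dx => -[Ax /= Gx1] nAn.
    have Gx2 : c <= G x by rewrite leNgt; apply/negP => Gc; apply: nAn.
    rewrite eqS in Gx1; rewrite ler_norml; apply/andP; split; rewrite /c in Gx2 *; lra.
  - have GhL : (fun x => G x * h x) \in Lfun mu p%:E.
      apply: (@bdd_Lfun _ _ _ mu p p0 Hfin _ (M)); first exact: measurable_funM.
      by move=> x; apply: (@mul_bnd G).
    have Gh'L : (fun x => G x * h' x) \in Lfun mu p%:E.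
      apply: (@bdd_Lfun _ _ _ mu p p0 Hfin _ (M)); first exact: measurable_funM.
      by move=> x; apply: (@mul_bnd G).
    have rL : r \in Lfun mu p%:E.
      apply: (@bdd_Lfun _ _ _ mu p p0 Hfin _ (dl)) => // x.
      by rewrite (le_trans (rh x)) // ler_piMr // ltW.
    have GcL : (fun x => (G x - c) * h' x) \in Lfun mu p%:E.
      apply: (@bdd_Lfun _ _ _ mu p p0 Hfin _ (M + `|c|)).
        by apply: measurable_funM => //; apply: measurable_funB => //; exact: measurable_cst.
      move=> x; apply: (@mul_bnd (fun x => G x - c) h') => //; rewrite (le_trans (ler_normB _ _)) //.
      by rewrite lerD2r.
    have h'L : h' \in Lfun mu p%:E by apply: (@bdd_Lfun _ _ _ mu p p0 Hfin _ (1)).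
    have E1 : S (fun x => G x * h2 x) = S (fun x => G x * h x) + S (fun x => G x * h' x).
      by rewrite -Hadd //; congr S; apply/funext => x /=; rewrite /h2 mulrDr.
    have E2 : S r2 = S r + S (fun x => (G x - c) * h' x) by rewrite -Hadd.
    have E3 : S (fun x => G x * h' x) = S (fun x => (G x - c) * h' x) + c *: S h'.
      have chL : (fun x => c * h' x) \in Lfun mu p%:E.
        apply: (@bdd_Lfun _ _ _ mu p p0 Hfin _ `|c|).
          by apply: measurable_funM => //; exact: measurable_cst.
        by move=> x; apply: (@mul_bnd (cst c) h').
      have -> : (fun x => G x * h' x) = (fun x => (G x - c) * h' x) \+ (fun x => c * h' x).
        by apply/funext => x /=; rewrite mulrBl subrK.
      by rewrite Hadd ?Hsc.
    rewrite E1 E2 E3 grp_id (le_trans (ler_normD _ _)) // normrZ.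
    have s0 := normr_ge0 (S h').
    move: Sh'; rewrite ltr_pdivlMr // mulrDr mulr1 => Sh'.
    rewrite -natr1 mulrDl mul1r (mulrC `|c|); lra.
have [h [r [sh mh mr rh HN']]] := key N.
have AN : An N = A.
  apply/seteqP; split => x; first by case.
  move=> Ax; split => //=.
  move: HN; rewrite ltr_pdivrMr // => HN.
  have := GMr x; lra.
exists h; split => //; first by rewrite -AN.
have hb x : `|h x| <= 1 := sign_abs x sh.
have mh_ := sign_meas sh.
have rL : r \in Lfun mu p%:E.
  apply: (@bdd_Lfun _ _ _ mu p p0 Hfin _ (dl)) => // x.
  by rewrite (le_trans (rh x)) // ler_piMr // ltW.
have Sr : `|S r| <= C * (dl * L).
  apply: (le_trans (HC r rL)); apply: ler_wpM2l => //.
  have le1 : (Lnorm mu p%:E (EFin \o r) <=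
      Lnorm mu p%:E (EFin \o (fun x => (dl * (cst 1 : T -> R) x)%R)))%E.
    apply: Lnorm_le => //.
      by apply: measurable_funM => //; exact: measurable_cst.
    move=> x; rewrite /= mulr1 (gtr0_norm dl0) (le_trans (rh x)) //.
    by rewrite ler_piMr // ltW.
  rewrite (@LnormZr _ _ _ mu p p0 dl (cst 1) (measurable_cst _)) in le1.
  have rfin : Lnorm mu p%:E (EFin \o r) \is a fin_num.
    by rewrite ge0_fin_numE ?Lnorm_ge0 //; move: rL => /andP[_]; rewrite inE.
  have := fine_le rfin _ le1; rewrite fineM // ?gtr0_norm //; apply.
  by rewrite fin_numM.
have := ler_normD (S (fun x => G x * h x) - S r) (S r); rewrite subrK => Ht.
have h1 : N%:R * eta + eta = eps / 2.
  rewrite /eta; field; lra.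
have h2 : C * (dl * L) + dl = eps / 2.
  rewrite /dl; field; lra.
lra.
Qed.

End ops.

Unset Implicit Arguments.
Set Strict Implicit.
Theorem lemma2p1 (d : measure_display) (T : measurableType d) (R : realType)
    (mu : {measure set T -> \bar R})
    (Hna : nonatomic mu)
    (Hpos : (0 < mu setT)%E) (Hfin : (mu setT < +oo)%E)
    (p : R) (Hp : 1 <= p)
    (Y : completeNormedModType R)
    (g : T -> R) (Hg : g \in Lfun mu +oo%E)
    (S : (T -> R) -> Y)
    (HS : bounded_op mu p S) (HSn : narrow mu S) :
  bounded_op mu p (fun f => S (fun x => g x * f x)) /\
  narrow mu (fun f => S (fun x => g x * f x)).
Proof.
have p0 : 0 < p by lra.
have mg := Lfun_meas Hg.
have gfin : (Lnorm mu +oo%E (EFin \o g) < +oo)%E.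
  by move: Hg => /andP[_]; rewrite inE.
rewrite unlock /= Hpos in gfin.
set Mx := ess_sup mu _ in gfin.
have Mx0 : (0 <= Mx)%E.
  by have := Lnorm_ge0 mu +oo%E (EFin \o g); rewrite unlock /= Hpos.
have Mxfin : Mx \is a fin_num by rewrite ge0_fin_numE.
set M := fine Mx.
have M0 : 0 <= M by apply: fine_ge0.
have gae : \forall x \ae mu, `|g x| <= M.
  apply: filterS (ess_sup_ge mu (abse \o (EFin \o g))) => x /=.
  by rewrite -/Mx -(fineK Mxfin) lee_fin.
pose g' := fun x => Num.max (- M) (Num.min M (g x)).
have mg' : measurable_fun setT g'.
  apply: (measurable_maxr (f := cst (- M)) (g := fun x => Num.min M (g x))).
    first [ by [] | exact: (@measurable_cst _ _ T R setT (- M)) | apply/measurable_EFinP; exact: measurable_cst].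
  apply: (measurable_minr (f := cst M) (g := g)) => //.
have g'b x : `|g' x| <= M.
  rewrite ler_norml le_max lexx /= ge_max; apply/andP; split; first lra.
  by rewrite ge_min lexx.
have g'eq x : `|g x| <= M -> g' x = g x.
  rewrite ler_norml => /andP[h1 h2].
  by rewrite /g' (min_idPr h2) (max_idPr h1).
have aeg (f : T -> R) : (fun x => g x * f x) = (fun x => g' x * f x) %[ae mu].
  by apply: filterS gae => x gx _; rewrite g'eq.
have [C [C0 HC]] := S_norm HS.
have [Hadd Hsc _] := HS.
have gfL f : f \in Lfun mu p%:E -> (fun x => g x * f x) \in Lfun mu p%:E /\
    (Lnorm mu p%:E (EFin \o (fun x => (g x * f x)%R)) <= M%:E * Lnorm mu p%:E (EFin \o f))%E.
  move=> fL; have mf := Lfun_meas fL.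
  have mgf : measurable_fun setT (fun x => g x * f x) by exact: measurable_funM.
  have mg'f : measurable_fun setT (fun x => g' x * f x) by exact: measurable_funM.
  have le1 : (Lnorm mu p%:E (EFin \o (fun x => (g x * f x)%R)) <= M%:E * Lnorm mu p%:E (EFin \o f))%E.
    rewrite (Lnorm_ae p mgf mg'f (aeg f)).
    rewrite -(ger0_norm M0) -LnormZr //.
    apply: Lnorm_le => //; first by apply: measurable_funM => //; exact: measurable_cst.
    move=> x; rewrite !normrM ler_wpM2r // (ger0_norm M0); exact: g'b.
  split => //.
  rewrite inE; apply/andP; split; rewrite inE //= /finite_norm.
  apply: (le_lt_trans le1); rewrite lte_mul_pinfty //.
  by move: fL => /andP[_]; rewrite inE.
split.
  split.
  - move=> f h fL hL.
    have -> : (fun x => g x * (f \+ h) x) = (fun x => g x * f x) \+ (fun x => g x * h x).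
      by apply/funext => x /=; rewrite mulrDr.
    by rewrite Hadd //; [exact: (gfL f fL).1 | exact: (gfL h hL).1].
  - move=> a f fL.
    have -> : (fun x => g x * (a * f x)) = (fun x => a * (g x * f x)).
      by apply/funext => x; rewrite mulrCA.
    by rewrite Hsc //; exact: (gfL f fL).1.
  - exists (C * M) => f fL.
    have [gL le1] := gfL f fL.
    apply: (le_trans (HC _ gL)); rewrite -mulrA; apply: ler_wpM2l => //.
    have ffin : Lnorm mu p%:E (EFin \o f) \is a fin_num.
      by rewrite ge0_fin_numE ?Lnorm_ge0 //; move: fL => /andP[_]; rewrite inE.
    have gfin' : Lnorm mu p%:E (EFin \o (fun x => (g x * f x)%R)) \is a fin_num.
      by rewrite ge0_fin_numE ?Lnorm_ge0 //; move: gL => /andP[_]; rewrite inE.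
    by have := fine_le gfin' _ le1; rewrite fineM //; apply; rewrite fin_numM.
move=> A mA muA eps eps0.
have [h [sh mh Sh]] := narrow_core p0 Hfin HS HSn M0 mg' g'b mA muA eps0.
exists h; split => //.
have hL : h \in Lfun mu p%:E.
  by apply: (@bdd_Lfun _ _ _ mu p p0 Hfin _ 1) => //; [exact: sign_meas sh | move=> x; exact: sign_abs x sh].
have g'hL : (fun x => g' x * h x) \in Lfun mu p%:E.
  apply: (@bdd_Lfun _ _ _ mu p p0 Hfin _ M).
    by apply: measurable_funM => //; exact: sign_meas sh.
  move=> x; rewrite normrM -[M]mulr1; apply: ler_pM => //; exact: sign_abs x sh.
by rewrite (S_ae p0 HS (gfL h hL).1 g'hL (aeg h)).
Qed.
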